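(* Let $\mathcal{M}$ be a set of models, $c:\mathcal{M}\to(0,\infty)$ a cost function, $\mathcal{S}$ a step neighborhood function and $m_0\in\mathcal{M}$ a base model, as described in the context. Assume that $c(\cdot)$ is bounded, i.e. there is $c_{\max}\in\mathbb{R}$ with $0<c(m)\le c_{\max}$ for all $m\in\mathcal{M}$. (a) Let $m^+,m^-\in\mathcal{M}$ with $\mathcal{P}(m^+)\neq\emptyset$, and suppose that either $\mathcal{L}_{\mathrm{complexity}}(m^+)<\mathcal{L}_{\mathrm{complexity}}(m^-)$, or $\mathcal{L}_{\mathrm{complexity}}(m^+)=\mathcal{L}_{\mathrm{complexity}}(m^-)$ and $c(m^+)<c(m^-)$. Then $$\lim_{\gamma\to+\infty}\big(\mathcal{L}_\gamma(m^-)-\mathcal{L}_\gamma(m^+)\big)=+\infty.$$ (b) Let $\bm{m}^+,\bm{m}^-\in\mathcal{P}$ be interpretable paths with $\bm{c}(\bm{m}^+)\preceq\bm{c}(\bm{m}^-)$, where $\preceq$ is the lexicographic order on $\mathbb{R}^{\mathbb{N}}$. Then $$\lim_{\gamma\to 0}\big(\mathcal{L}_\gamma(\bm{m}^-)-\mathcal{L}_\gamma(\bm{m}^+)\big)\ge 0.$$ Consequently, given models $m^+,m^-\in\mathcal{M}$, if there exists $\bm{m}^+\in\mathcal{P}(m^+)$ such that $\bm{c}(\bm{m}^+)\preceq\bm{c}(\bm{m}^-)$ for all $\bm{m}^-\in\mathcal{P}(m^-)$, then $$\lim_{\gamma\to 0}\big(\mathcal{L}_\gamma(m^-)-\mathcal{L}_\gamma(m^+)\big)\ge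 0.$$
   Context: Setting: $\mathcal{M}$ is a set (of models), $c:\mathcal{M}\to(0,\infty)$ is a cost function, and $\mathcal{S}:\mathcal{M}\to 2^{\mathcal{M}}$ is a step neighborhood function with $\mathcal{S}(m)\neq\emptyset$ for all $m$; $m'$ is ''one interpretable step from $m$'' iff $m'\in\mathcal{S}(m)$. A fixed base model $m_0\in\mathcal{M}$ is given. An interpretable path of length $K\ge 0$ is a sequence $\bm{m}=(m_1,\dots,m_K)$ of models with $m_k\in\mathcal{S}(m_{k-1})$ for $1\le k\le K$ (starting from $m_0$); its length is $|\bm{m}|=K$, and its final model is $m_K$ (the final model of the length-$0$ path is $m_0$). $\mathcal{P}_K$ is the set of paths of length $K$, $\mathcal{P}=\bigcup_{K\ge0}\mathcal{P}_K$, $\mathcal{P}_K(m)=\{\bm{m}\in\mathcal{P}_K: m_K=m\}$ and $\mathcal{P}(m)=\bigcup_{K\ge0}\mathcal{P}_K(m)$. The model complexity is $\mathcal{L}_{\mathrm{complexity}}(m)=\min_{\bm{m}\in\mathcal{P}(m)}|\bm{m}|$ (equal to $\infty$ if $\mathcal{P}(m)=\emptyset$). The cost sequence of a path $\bm{m}\in\mathcal{P}_K$ is the infinite sequence $\bm{c}(\bm{m})=(c_1,c_2,\dots)$ with $c_k=c(m_k)$ for $k\le K$ and $c_k=0$ for $k>K$. For $\gamma>0$, the path interpretability loss is $\mathcal{L}_\gamma(\bm{m})=\sum_{k=1}^{|\bm{m}|}\gamma^k c(m_k)$, and the model interpretability loss is $\mathcal{L}_\gamma(m)=\infty$ if $\mathcal{P}(m)=\emptyset$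 and $\mathcal{L}_\gamma(m)=\inf_{\bm{m}\in\mathcal{P}(m)}\mathcal{L}_\gamma(\bm{m})$ otherwise. *)

(* Defs.v *)
From HB Require Import structures.
From mathcomp Require Import all_boot all_order all_algebra.
From mathcomp Require Import all_classical all_reals all_analysis.
Set Implicit Arguments. Unset Strict Implicit. Unset Printing Implicit Defensive.
Import Order.TTheory GRing.Theory Num.Theory.
Local Open Scope classical_set_scope.
Local Open Scope ring_scope.

Section Interp.
Variables (M : Type) (S : M -> set M) (m0 : M).

Fixpoint is_ipath_from (prev : M) (s : seq M) : Prop :=
  match s with
  | [::] => True
  | x :: s' => S prev x /\ is_ipath_from x s'
  end.

Definition ipaths : set (seq M) := [set s | is_ipath_from m0 s].

Definition final_model (s : seq M) : M := last m0 s.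

Definition ipaths_to (m : M) : set (seq M) :=
  [set s | ipaths s /\ final_model s = m].

Variable R : realType.

Definition complexity (m : M) : \bar R :=
  ereal_inf [set ((size s)%:R)%:E | s in ipaths_to m].

Variable c : M -> R.

(* cost sequence, 0-indexed: cost_seq s n = c_(n+1) *)
Definition cost_seq (s : seq M) : nat -> R :=
  fun n => if (n < size s)%N then c (nth m0 s n) else 0.

Definition path_loss (gamma : R) (s : seq M) : R :=
  \sum_(k < size s) gamma ^+ k.+1 * c (nth m0 s k).

Definition model_loss (gamma : R) (m : M) : \bar R :=
  ereal_inf [set (path_loss gamma s)%:E | s in ipaths_to m].

End Interp.

Definition lex_le (R : realType) (u v : nat -> R) : Prop :=
  u = v \/ exists n, (forall i, (i < n)%N -> u i = v i) /\ u n < v n.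

(* Main.v *)
Require Import Defs.
From HB Require Import structures.
From mathcomp Require Import all_boot all_order all_algebra.
From mathcomp Require Import all_classical all_reals all_analysis.
From mathcomp Require Import ring lra.
Import Order.TTheory GRing.Theory Num.Theory.
Import numFieldNormedType.Exports.
Local Open Scope classical_set_scope.
Local Open Scope ring_scope.

Set Implicit Arguments.
Section H.
Variables (R : realType) (M : Type) (c : M -> R) (S : M -> set M) (m0 : M).
Hypothesis c_pos : forall m, 0 < c m.

Lemma pl_ge0 g s : 0 <= g -> 0 <= path_loss m0 c g s.
Proof.
move=> g0; apply: sumr_ge0 => k _; apply: mulr_ge0; first exact: exprn_ge0.
exact: ltW.
Qed.

Lemma gsum_le (g C : R) (F : nat -> R) n : 1 <= g -> 0 <= C -> (forall k, F k <= C) ->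
  \sum_(k < n) g ^+ k.+1 * F k <= n%:R * C * g ^+ n.
Proof.
move=> g1 C0 FC.
have g0 : 0 <= g by apply: le_trans g1.
elim: n => [|n IH]; first by rewrite big_ord0 mul0r mul0r.
rewrite big_ord_recr /= -addn1 natrD mulrDl mul1r mulrDl.
apply: lerD.
  apply: le_trans IH _; rewrite -mulrA -[X in _ <= X]mulrA; apply: ler_wpM2l => //.
  apply: ler_wpM2l => //; apply: ler_weXn2l => //; exact: leq_addr.
by rewrite addn1 mulrC; apply: ler_wpM2r => //; exact: exprn_ge0.
Qed.

Lemma pl_small g s C : 0 <= g -> g <= 1 -> (forall m, c m <= C) ->
  path_loss m0 c g s <= g * ((size s)%:R * C).
Proof.
move=> g0 g1 cC.
have C0 : 0 <= C by apply: le_trans (cC m0); exact: ltW.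
rewrite /path_loss.
apply: (@le_trans _ _ (\sum_(k < size s) g * C)).
  apply: ler_sum => k _; rewrite exprS -mulrA; apply: ler_wpM2l => //.
  apply: le_trans (_ : 1 * C <= _); last by rewrite mul1r.
  by apply: ler_pM => //; [exact: exprn_ge0|exact: ltW|exact: exprn_ile1].
have -> : \sum_(k < size s) g * C = (size s)%:R * (g * C) by rewrite sumr_const card_ord mulr_natl.
by rewrite mulrA [_ * g]mulrC -mulrA.
Qed.

Lemma pl_to0 s : (exists C, forall m, c m <= C) ->
  (fun g => path_loss m0 c g s) @ 0^'+ --> 0.
Proof.
move=> [C cC].
have C0 : 0 <= C by apply: le_trans (cC m0); exact: ltW.
set K := (size s)%:R * C.
have K0 : 0 <= K by apply: mulr_ge0.
apply/cvgrPdist_lt => e e0.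
have d0 : 0 < Num.min 1 (e / (K + 1)).
  by rewrite lt_min ltr01 /= divr_gt0 // ltr_wpDl.
near=> g.
have g0 : 0 < g by near: g; exact: nbhs_right_gt.
have gd : g < Num.min 1 (e / (K + 1)) by near: g; exact: nbhs_right_lt.
move: gd; rewrite lt_min => /andP[g1 ge].
rewrite sub0r normrN ger0_norm; last exact: pl_ge0 (ltW g0).
apply: le_lt_trans (pl_small _ s _ (ltW g0) (ltW g1) cC) _.
rewrite -/K.
apply: le_lt_trans (_ : g * (K + 1) < e).
  by apply: ler_wpM2l; [exact: ltW| rewrite lerDl].
by rewrite -ltr_pdivlMr // ltr_wpDl.
Unshelve. all: by end_near.
Qed.
Local Open Scope ereal_scope.

Lemma ml_ge0 g m : (0 < g)%R -> 0 <= model_loss S m0 c g m.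
Proof.
move=> g0; apply: le_ereal_inf_tmp => x [s _ <-]; rewrite lee_fin.
exact: pl_ge0 (ltW g0).
Qed.

Lemma ml_le g m s : ipaths_to S m0 m s -> model_loss S m0 c g m <= (path_loss m0 c g s)%:E.
Proof. by move=> hs; apply: ereal_inf_lbound; exists s. Qed.

Lemma min_path m s : ipaths_to S m0 m s -> exists sp, ipaths_to S m0 m sp /\
  forall s', ipaths_to S m0 m s' -> (size sp <= size s')%N.
Proof.
suff H : forall n s, (size s <= n)%N -> ipaths_to S m0 m s -> exists sp, ipaths_to S m0 m sp /\
  forall s', ipaths_to S m0 m s' -> (size sp <= size s')%N by apply: (H _ s).
elim=> [|n IH] s1 hn hs1.
  exists s1; split => // s' _; move: hn; rewrite leqn0 => /eqP ->; exact: leq0n.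
have [hmin|] := pselect (forall s', ipaths_to S m0 m s' -> (size s1 <= size s')%N).
  by exists s1.
move=> /existsNP [s' /not_implyP [hs' hlt]].
apply: (IH s') => //.
move: hlt => /negP; rewrite -ltnNge => hlt.
by rewrite -ltnS (leq_trans hlt hn).
Qed.

Lemma compl_le m s : ipaths_to S m0 m s -> complexity S m0 R m <= (size s)%:R%:E.
Proof. by move=> hs; apply: ereal_inf_lbound; exists s. Qed.

Lemma compl_eq m sp : ipaths_to S m0 m sp ->
  (forall s', ipaths_to S m0 m s' -> (size sp <= size s')%N) ->
  complexity S m0 R m = (size sp)%:R%:E.
Proof.
move=> hsp hmin; apply/le_anti/andP; split; first exact: compl_le.
apply: le_ereal_inf_tmp => x [s hs <-]; rewrite lee_fin ler_nat; exact: hmin.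
Qed.

Lemma compl_empty m : ~ (exists s, ipaths_to S m0 m s) -> complexity S m0 R m = +oo.
Proof.
move=> hne; apply/ereal_inf_pinfty => x [s hs _]; exfalso; apply: hne; by exists s.
Qed.

Lemma ml_empty g m : ~ (exists s, ipaths_to S m0 m s) -> model_loss S m0 c g m = +oo.
Proof.
move=> hne; apply/ereal_inf_pinfty => x [s hs _]; exfalso; apply: hne; by exists s.
Qed.

Lemma pl_lower g m s N : (1 <= g)%R -> ipaths_to S m0 m s -> (1 <= N <= size s)%N ->
  (g ^+ N * c m <= path_loss m0 c g s)%R.
Proof.
move=> g1 [_ hfin] /andP[N1 Ns].
have g0 : (0 <= g)%R by apply: le_trans g1.
have hs : size s = (size s).-1.+1 by rewrite prednK // (leq_trans N1 Ns).
have hl : nth m0 s (size s).-1 = m by rewrite nth_last.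
rewrite /path_loss hs big_ord_recr /= hl.
apply: ler_wpDl.
  apply: sumr_ge0 => k _; apply: mulr_ge0; first exact: exprn_ge0.
  exact: ltW.
apply: ler_wpM2r; first exact: ltW.
by apply: ler_weXn2l => //; rewrite -hs.
Qed.

Local Close Scope ereal_scope.
Lemma part_a_core mp mm n (B a : R) :
  (forall sm, ipaths_to S m0 mm sm -> (n.+1 <= size sm)%N) -> (0 <= B)%R -> (a < c mm)%R ->
  (forall g, (1 <= g)%R -> (model_loss S m0 c g mp <= (g ^+ n.+1 * a + B * g ^+ n)%:E)%E) ->
  (fun g : R => (model_loss S m0 c g mm - model_loss S m0 c g mp)%E) @ +oo --> +oo%E.
Proof.
move=> hsz B0 ha hup; apply/cvgeyPge => A.
set d := (c mm - a)%R.
have d0 : (0 < d)%R by rewrite subr_gt0.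
near=> g.
have g1 : (1 <= g)%R by near: g; apply: nbhs_pinfty_ge; exact: num_real.
have gb : ((B + Num.max A 0) / d <= g)%R by near: g; apply: nbhs_pinfty_ge; exact: num_real.
have lo : ((g ^+ n.+1 * c mm)%:E <= model_loss S m0 c g mm)%E.
  apply: le_ereal_inf_tmp => x [s hs <-]; rewrite lee_fin.
  by apply: pl_lower => //; rewrite /= hsz.
apply: le_trans (leeB lo (hup g g1)).
rewrite -EFinB lee_fin.
have -> : (g ^+ n.+1 * c mm - (g ^+ n.+1 * a + B * g ^+ n) = g ^+ n * (g * d - B))%R.
  rewrite /d exprS; ring.
have hX : (Num.max A 0 <= g * d - B)%R.
  by move: gb; rewrite ler_pdivrMr // lerBrDl.

have X0 : (0 <= g * d - B)%R by apply: le_trans hX; rewrite le_max lexx orbT.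
apply: le_trans (_ : (g * d - B <= _)%R); first by apply: le_trans hX; rewrite le_max lexx.
by apply: ler_peMl => //; exact: exprn_ege1.
Unshelve. all: by end_near.
Qed.

End H.
Unset Implicit Arguments.
Require Import Defs.
From HB Require Import structures.
From mathcomp Require Import all_boot all_order all_algebra.
From mathcomp Require Import all_classical all_reals all_analysis.
Import Order.TTheory GRing.Theory Num.Theory.
Import numFieldNormedType.Exports.
Local Open Scope classical_set_scope.
Local Open Scope ring_scope.

Theorem theorem1 (R : realType) (M : Type) (c : M -> R) (S : M -> set M) (m0 : M)
  (c_pos : forall m, 0 < c m)
  (c_bdd : exists cmax : R, forall m, c m <= cmax)
  (S_ne : forall m, S m !=set0) :
  (* (a) *)
  (forall mp mm : M,
     ipaths_to S m0 mp !=set0 ->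
     ((complexity S m0 R mp < complexity S m0 R mm)%E \/
      (complexity S m0 R mp = complexity S m0 R mm /\ c mp < c mm)) ->
     (fun g : R => (model_loss S m0 c g mm - model_loss S m0 c g mp)%E)
       @ +oo --> +oo%E)
  /\
  (* (b), paths *)
  (forall sp sm : seq M,
     ipaths S m0 sp -> ipaths S m0 sm ->
     lex_le (cost_seq m0 c sp) (cost_seq m0 c sm) ->
     exists l : R, 0 <= l /\
       (fun g : R => path_loss m0 c g sm - path_loss m0 c g sp) @ 0^'+ --> l)
  /\
  (* (b), consequence for models *)
  (forall mp mm : M,
     (exists sp, ipaths_to S m0 mp sp /\
        forall sm, ipaths_to S m0 mm sm ->
          lex_le (cost_seq m0 c sp) (cost_seq m0 c sm)) ->
     exists l : \bar R, (0 <= l)%E /\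
       (fun g : R => (model_loss S m0 c g mm - model_loss S m0 c g mp)%E)
         @ 0^'+ --> l).
Proof.
have [C hC] := c_bdd.
have C0 : 0 <= C by apply: le_trans (hC m0); exact: ltW.
split; [|split].
- move=> mp mm [s0 hs0] hcase.
  have [sp [hsp hmin]] := min_path hs0.
  have cp := compl_eq R hsp hmin.
  case: hcase => [hlt|[heq hc]].
  + rewrite cp in hlt.
    apply: (@part_a_core _ _ c S m0 c_pos mp mm (size sp) ((size sp)%:R * C) 0).
    * move=> sm hsm; have := lt_le_trans hlt (compl_le R hsm).
      by rewrite lte_fin ltr_nat.
    * exact: mulr_ge0.
    * exact: c_pos.
    * move=> g g1; apply: le_trans (ml_le R c _ hsp) _; rewrite lee_fin mulr0 add0r.
      exact: (@gsum_le R g C (fun k => c (nth m0 sp k))).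

  + have [[sm0 hsm0]|hne] := pselect (exists s, ipaths_to S m0 mm s); last first.
      by rewrite cp (compl_empty R hne) in heq.
    have [sm [hsm hminm]] := min_path hsm0.
    rewrite cp (compl_eq R hsm hminm) in heq.
    have heq2 : (size sp)%:R = (size sm)%:R :> R by case: heq.
    move/eqP: heq2; rewrite eqr_nat => /eqP {}heq.
    case hn : (size sp) heq => [|n'] heq.
      move: hn heq => /size0nil hsp0 /esym /size0nil hsm1.
      move: hsp hsm => [_ hfp] [_ hfm].
      move: hfp hfm; rewrite hsp0 hsm1 /final_model /= => hp hm.
      by move: hc; rewrite -hp -hm ltxx.
    apply: (@part_a_core _ _ c S m0 c_pos mp mm n' (n'%:R * C) (c mp)) => //.
    * by move=> sm' hsm'; rewrite heq; exact: hminm.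
    * exact: mulr_ge0.
    * move=> g g1; apply: le_trans (ml_le R c _ hsp) _; rewrite lee_fin.
      have hl : nth m0 sp n' = mp.
        by move: hsp => [_ <-]; rewrite /final_model -nth_last hn.
      rewrite /path_loss hn big_ord_recr /= hl addrC lerD2l.
      exact: (@gsum_le R g C (fun k => c (nth m0 sp k))).

- move=> sp sm _ _ _; exists 0; split => //.
  have := cvgB (pl_to0 c m0 c_pos sm (ex_intro _ C hC)) (pl_to0 c m0 c_pos sp (ex_intro _ C hC)).
  by rewrite subr0; apply; exact: at_right_proper_filter.

- move=> mp mm [sp [hsp _]].
  have [[sm hsm]|hne] := pselect (exists s, ipaths_to S m0 mm s).
  + exists 0%E; split => //.
    apply: (@squeeze_cvge _ _ _ _ (fun g => (- path_loss m0 c g sp)%:E) _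
                                  (fun g => (path_loss m0 c g sm)%:E)).
    * near=> g.
      have g0 : 0 < g by near: g; exact: nbhs_right_gt.
      apply/andP; split.
        have := leeB (@ml_ge0 R M c S m0 c_pos g mm g0) (ml_le R c g hsp).
        by rewrite add0e EFinN.
      have := leeB (ml_le R c g hsm) (@ml_ge0 R M c S m0 c_pos g mp g0).
      by rewrite sube0.
    * apply: cvg_EFin; first by near=> g.
      have H0 := cvgN (pl_to0 c m0 c_pos sp (ex_intro _ C hC)); rewrite oppr0 in H0; exact: H0.
    * apply: cvg_EFin; first by near=> g.
      exact: (pl_to0 c m0 c_pos sm (ex_intro _ C hC)).
  + exists +oo%E; split; first exact: leey.
    apply/cvgeyPge => A; near=> g.
    rewrite (ml_empty R c g hne).
    have := ml_le R c g hsp.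
    by case: (model_loss S m0 c g mp) => [r| |] //= _; rewrite leey.
Unshelve. all: by end_near.
Qed.
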